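(* Let $\mathcal{C}$ be a set of representatives of the isomorphism classes of finite connected racks. For $C\in\mathcal{C}$, let $\Phi_C\colon \mathrm{B}(\mathcal{R})\to\mathbb{Z}$ be the ring homomorphism determined by $\Phi_C(b(R))=|\mathrm{Mor}_{\mathcal{R}}(C,R)|$ for finite racks $R$, where $\mathrm{Mor}_{\mathcal{R}}(C,R)$ is the set of rack morphisms $C\to R$. Then the ring homomorphism $$\prod_{C\in\mathcal{C}}\Phi_C\colon \mathrm{B}(\mathcal{R})\longrightarrow\prod_{C\in\mathcal{C}}\mathbb{Z}$$ is injective.
   Context: A rack is a set $R$ with a binary operation $\rhd$ such that every left multiplication $\ell_a\colon b\mapsto a\rhd b$ is a bijection and $a\rhd(b\rhd c)=(a\rhd b)\rhd(a\rhd c)$ for all $a,b,c$. Morphisms of racks are maps preserving $\rhd$; the product $R\times S$ of racks is the cartesian product with componentwise operation. The inner automorphism group $\mathrm{Inn}(R)$ is the subgroup of the symmetric group on $R$ generated by all $\ell_a$. A rack is connected if it is non-empty and $\mathrm{Inn}(R)$ acts transitively on $R$. A subrack of $R$ is a subset $S$ with $\ell_s(S)=S$ for all $s\in S$. A decomposition of $R$ into $S$ and $T$ means that $S,T$ are disjoint subracks (possibly empty) with $S\cup T=R$. The Burnside ring of finite racks $\mathrm{B}(\mathcal{R})$ is the abelian group generated by symbols $b(R)$, one for each finite rack $R$, subject to the relations $b(R_1)=b(R_2)$ whenever $R_1\cong R_2$, and $b(R)=b(S)+b(T)$ whenever $R$ decomposes into subracks $S$ and $T$; it is a commutative ring with $b(R)b(R')=b(R\times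 R')$ and unit $b(\star)$, $\star$ the one-element rack. (That $\Phi_C$ is a well-defined ring homomorphism is part of the setting.) *)

(* Defs.v *)
From HB Require Import structures.
From mathcomp Require Import all_boot all_order all_algebra all_fingroup.
From mathcomp Require Import boolp.
Set Implicit Arguments. Unset Strict Implicit. Unset Printing Implicit Defensive.
Import GRing.Theory.
Local Open Scope ring_scope.

Record FinRack := MkFinRack {
  rcar :> finType;
  rop : rcar -> rcar -> rcar;
  rop_bij : forall a, bijective (rop a);
  rop_dist : forall a b c, rop a (rop b c) = rop (rop a b) (rop a c)
}.

Definition is_rack_mor (R S : FinRack) (f : R -> S) : Prop :=
  forall a b, f (rop a b) = rop (f a) (f b).

Definition Mor (C R : FinRack) : {set {ffun C -> R}} :=
  [set f : {ffun C -> R} | [forall a, forall b, f (rop a b) == rop (f a) (f b)]].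

Definition rack_iso (R S : FinRack) : Prop :=
  exists f : R -> S, is_rack_mor f /\ bijective f.

Definition lperm (R : FinRack) (a : R) : {perm R} := perm (bij_inj (rop_bij a)).

Definition Inn (R : FinRack) : {set {perm R}} := <<[set lperm a | a : R]>>%g.

Definition connected_rack (R : FinRack) : Prop :=
  (0 < #|R|)%N /\ forall x y : R, exists2 g, g \in Inn R & g x = y.

Definition subrack (R : FinRack) (S : {set R}) : Prop :=
  forall s, s \in S -> rop s @: S = S.

Section SubRack.
Variables (R : FinRack) (S : {set R}) (HS : subrack S).

Definition sub_car : finType := {x : R | x \in S}.

Lemma sub_op_in (x y : sub_car) : rop (val x) (val y) \in S.
Proof.
have H := HS (valP x).
have : rop (val x) (val y) \in rop (val x) @: S by apply: imset_f; exact: valP.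
by rewrite H.
Qed.

Definition sub_op (x y : sub_car) : sub_car := exist (fun z : R => z \in S) _ (sub_op_in x y).

Lemma sub_op_bij a : bijective (sub_op a).
Proof.
apply: injF_bij => x y /(congr1 val) /= H.
by apply: val_inj; exact: (bij_inj (rop_bij (val a)) H).
Qed.

Lemma sub_op_dist a b c : sub_op a (sub_op b c) = sub_op (sub_op a b) (sub_op a c).
Proof. by apply: val_inj; rewrite /= rop_dist. Qed.

Definition subRack : FinRack := MkFinRack sub_op_bij sub_op_dist.
End SubRack.

(* Free abelian group on (finite racks): formal Z-linear combinations.  *)
Definition fsum := seq (int * FinRack).

Definition fcoef (x : fsum) (R : FinRack) : int :=
  \sum_(p <- x) (if `[< p.2 = R >] then p.1 else 0).

Definition relator (r : fsum) : Prop :=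
  (exists R1 R2 : FinRack, rack_iso R1 R2 /\ r = [:: (1, R1); (-1, R2)]) \/
  (exists (R : FinRack) (S T : {set R}) (HS : subrack S) (HT : subrack T),
      [disjoint S & T] /\ S :|: T = setT /\
      r = [:: (1, R); (-1, subRack HS); (-1, subRack HT)]).

(* x and y define the same element of B(R): x - y lies in the subgroup of the
   free abelian group generated by the relators. *)
Definition burnside_eq (x y : fsum) : Prop :=
  exists (n : nat) (k : 'I_n -> int) (r : 'I_n -> fsum),
    (forall i, relator (r i)) /\
    forall R, fcoef x R - fcoef y R = \sum_(i < n) k i * fcoef (r i) R.

Definition Phi (C : FinRack) (x : fsum) : int :=
  \sum_(p <- x) p.1 * (#|Mor C p.2|)%:Z.

(* Main.v *)
Require Import Defs.
From HB Require Import structures.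
From mathcomp Require Import all_boot all_order all_algebra all_fingroup.
From mathcomp Require Import boolp.
From mathcomp Require Import ring zify.
From Stdlib Require List.
Set Implicit Arguments. Unset Strict Implicit. Unset Printing Implicit Defensive.
Import GRing.Theory Num.Theory.

Local Open Scope ring_scope.

Definition spanned (v : FinRack -> int) : Prop :=
  exists (n : nat) (k : 'I_n -> int) (r : 'I_n -> fsum),
    (forall i, relator (r i)) /\
    forall R, v R = \sum_(i < n) k i * fcoef (r i) R.

Lemma spanned_ext u v : (forall R, u R = v R) -> spanned u -> spanned v.
Proof. by move=> e [n [k [r [Hs Hv]]]]; exists n, k, r; split=> // R; rewrite -e. Qed.

Lemma spanned_rel r : relator r -> spanned (fcoef r).
Proof.
move=> Hr; exists 1%N, (fun _ => 1), (fun _ => r); split=> // R.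
by rewrite big_ord1 mul1r.
Qed.

Lemma spanned0 : spanned (fun _ => 0).
Proof. by exists 0%N, (fun _ => 0), (fun _ => [::]); split=> [[]|R]; rewrite ?big_ord0. Qed.

Lemma spannedD u v : spanned u -> spanned v -> spanned (fun R => u R + v R).
Proof.
move=> [n1 [k1 [r1 [H1 E1]]]] [n2 [k2 [r2 [H2 E2]]]].
exists (n1 + n2)%N, (fun i => match split i with inl j => k1 j | inr j => k2 j end),
  (fun i => match split i with inl j => r1 j | inr j => r2 j end); split.
  by move=> i; case: (split i).
move=> R; rewrite big_split_ord E1 E2; congr (_ + _); apply: eq_bigr => i _.
  by rewrite (unsplitK (inl i)).
by rewrite (unsplitK (inr i)).
Qed.

Lemma spannedZ c u : spanned u -> spanned (fun R => c * u R).
Proof.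
move=> [n [k [r [H E]]]]; exists n, (fun i => c * k i), r; split=> // R.
rewrite E big_distrr; apply: eq_bigr => i _ /=. by rewrite mulrA.
Qed.

Lemma spanned_beq x y : spanned (fun R => fcoef x R - fcoef y R) -> burnside_eq x y.
Proof. by []. Qed.

Lemma fcoef_nil R : fcoef [::] R = 0.
Proof. by rewrite /fcoef big_nil. Qed.

Lemma fcoef_cons p x R : fcoef (p :: x) R = (if `[< p.2 = R >] then p.1 else 0) + fcoef x R.
Proof. by rewrite /fcoef big_cons. Qed.

Lemma fcoef_cat x y R : fcoef (x ++ y) R = fcoef x R + fcoef y R.
Proof. by rewrite /fcoef big_cat. Qed.

Lemma fcoef_scale c x R : fcoef (map (fun p => (c * p.1, p.2)) x) R = c * fcoef x R.
Proof.
rewrite /fcoef big_map big_distrr; apply: eq_bigr => p _ /=.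
by case: ifP; rewrite ?mulr0.
Qed.

Lemma Phi_nil C : Phi C [::] = 0.
Proof. by rewrite /Phi big_nil. Qed.

Lemma Phi_cons C p x : Phi C (p :: x) = p.1 * (#|Mor C p.2|)%:Z + Phi C x.
Proof. by rewrite /Phi big_cons. Qed.

Lemma Phi_cat C x y : Phi C (x ++ y) = Phi C x + Phi C y.
Proof. by rewrite /Phi big_cat. Qed.

Lemma Phi_scale C c x : Phi C (map (fun p => (c * p.1, p.2)) x) = c * Phi C x.
Proof.
rewrite /Phi big_map big_distrr; apply: eq_bigr => p _ /=; by rewrite mulrA.
Qed.

Lemma eq_big_In (T : Type) (s : seq T) (F G : T -> int) :
  (forall p, List.In p s -> F p = G p) -> \sum_(p <- s) F p = \sum_(p <- s) G p.
Proof.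
elim: s => [|a s IH] H; first by rewrite !big_nil.
rewrite !big_cons H /=; last by left.
by rewrite IH // => p Hp; apply: H; right.
Qed.

Fixpoint dedupF (T : Type) (s : seq T) : seq T :=
  match s with
  | [::] => [::]
  | a :: s' => if `[< List.In a s' >] then dedupF s' else a :: dedupF s'
  end.

Lemma In_dedup (T : Type) (s : seq T) a : List.In a (dedupF s) <-> List.In a s.
Proof.
elim: s => [|b s IH] //=.
case: asboolP => Hb /=; rewrite IH; split; try tauto.
by case=> [<-|]; tauto.
Qed.

Lemma NoDup_dedup (T : Type) (s : seq T) : List.NoDup (dedupF s).
Proof.
elim: s => [|b s IH] /=; first by constructor.
case: asboolP => Hb //; constructor => //.
by rewrite In_dedup.
Qed.

Lemma sum_none (T : Type) (s : seq T) (P : T -> Prop) (F : T -> int) :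
  (forall a, List.In a s -> ~ P a) ->
  \sum_(a <- s) (if `[< P a >] then F a else 0) = 0.
Proof.
move=> H; rewrite (eq_big_In (G := fun _ => 0)) ?big1 // => a Ha.
by case: asboolP => // /(H a Ha).
Qed.

Lemma sum_unique (T : Type) (s : seq T) (P : T -> Prop) (F : T -> int) a0 :
  List.NoDup s -> List.In a0 s -> P a0 ->
  (forall a, List.In a s -> P a -> a = a0) ->
  \sum_(a <- s) (if `[< P a >] then F a else 0) = F a0.
Proof.
elim: s => [|b s IH] //= Hnd Ha0 HP Hu.
inversion Hnd as [|b' s' Hbs Hnds]; subst.
rewrite big_cons.
have [Hb|Hb] := pselect (b = a0).
  subst b; rewrite asboolT // sum_none ?addr0 // => a Ha Pa.
  by apply: Hbs; rewrite -(Hu a (or_intror Ha) Pa).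
case: Ha0 => [E|Ha0]; first by case: Hb.
rewrite asboolF ?add0r; last by move=> Pb; apply: Hb; apply: Hu => //; left.
by apply: IH => // a Ha Pa; apply: Hu => //; right.
Qed.

Lemma In_map_inv (A B : Type) (f : A -> B) (s : seq A) y :
  List.In y (map f s) -> exists x, List.In x s /\ y = f x.
Proof.
elim: s => [|a s IH] //= [<-|/IH [x [Hx ->]]]; first by exists a; split=> //; left.
by exists x; split=> //; right.
Qed.

Lemma In_map (A B : Type) (f : A -> B) (s : seq A) x :
  List.In x s -> List.In (f x) (map f s).
Proof. by elim: s => [|a s IH] //= [->|/IH]; [left|right]. Qed.

Lemma In_cat (A : Type) (s t : seq A) x :
  List.In x (s ++ t) <-> List.In x s \/ List.In x t.
Proof. by elim: s => [|a s IH] /=; [tauto|rewrite IH; tauto]. Qed.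

Lemma In_flatten (A B : Type) (f : A -> seq B) (s : seq A) y :
  List.In y (flatten (map f s)) <-> exists x, List.In x s /\ List.In y (f x).
Proof.
elim: s => [|a s IH] /=; first by split=> // [[x []]].
rewrite In_cat IH; split.
  by case=> [H|[x [Hx Hy]]]; [exists a; split=> //; left|exists x; split=> //; right].
by case=> x [[<-|Hx] Hy]; [left|right; exists x].
Qed.

Lemma memIn (T : eqType) (s : seq T) x : x \in s -> List.In x s.
Proof.
elim: s => [|a s IH] //; rewrite inE => /orP [/eqP ->|/IH]; [left|right] => //.
Qed.


Local Close Scope ring_scope.

Lemma MorP (C R : FinRack) (f : {ffun C -> R}) :
  reflect (is_rack_mor f) (f \in Mor C R).
Proof.
rewrite inE; apply: (iffP forallP) => H a.
  by move=> b; apply/eqP; move/forallP: (H a) => /(_ b).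
by apply/forallP => b; apply/eqP; apply: H.
Qed.

Lemma rop_inj (R : FinRack) (a : R) : injective (rop a).
Proof. exact: bij_inj (rop_bij a). Qed.

Lemma lpermE (R : FinRack) (a x : R) : lperm a x = rop a x.
Proof. by rewrite /lperm permE. Qed.

Lemma lperm_Inn (R : FinRack) (a : R) : lperm a \in Inn R.
Proof. by apply: mem_gen; apply: imset_f. Qed.

Lemma Inn_ind (R : FinRack) (P : {perm R} -> Prop) :
  P 1%g -> (forall g h, P g -> P h -> P (g * h)%g) -> (forall a, P (lperm a)) ->
  forall g, g \in Inn R -> P g.
Proof.
move=> P1 PM PL.
have gH : group_set [set g | `[< P g >]].
  apply/andP; split; first by rewrite inE; apply/asboolP.
  apply/subsetP => _ /mulsgP [g h Hg Hh ->].
  by move: Hg Hh; rewrite !inE => /asboolP Hg /asboolP Hh; apply/asboolP; apply: PM.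
have sub : Inn R \subset Group gH.
  rewrite /Inn gen_subG; apply/subsetP => _ /imsetP [a _ ->].
  by rewrite inE; apply/asboolP.
by move=> g /(subsetP sub); rewrite inE => /asboolP.
Qed.

Lemma inv_set (R : FinRack) (S : {set R}) :
  (forall s x, x \in S -> rop s x \in S) -> forall s x, (rop s x \in S) = (x \in S).
Proof.
move=> H s x.
have E : rop s @: S = S.
  apply/eqP; rewrite eqEcard card_imset; last exact: rop_inj.
  rewrite leqnn andbT; apply/subsetP => _ /imsetP [y Hy ->]; exact: H.
by rewrite -{1}E mem_imset //; apply: rop_inj.
Qed.

Lemma inv_subrack (R : FinRack) (S : {set R}) :
  (forall s x, x \in S -> rop s x \in S) -> subrack S.
Proof.
move=> H s _; apply/eqP; rewrite eqEcard card_imset; last exact: rop_inj.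
rewrite leqnn andbT; apply/subsetP => _ /imsetP [y Hy ->]; exact: H.
Qed.

Lemma inv_compl (R : FinRack) (S : {set R}) :
  (forall s x, x \in S -> rop s x \in S) -> forall s x, x \in ~: S -> rop s x \in ~: S.
Proof. by move=> H s x; rewrite !inE (inv_set H). Qed.

Lemma mor_comp (A B C : FinRack) (f : A -> B) (g : B -> C) :
  is_rack_mor f -> is_rack_mor g -> is_rack_mor (fun x => g (f x)).
Proof. by move=> Hf Hg a b; rewrite Hf Hg. Qed.

Lemma factor (C R D : FinRack) (e : R -> D) (f : C -> D) :
  is_rack_mor e -> injective e -> is_rack_mor f ->
  (forall c, f c \in e @: setT) ->
  exists g : C -> R, is_rack_mor g /\ forall c, e (g c) = f c.
Proof.
move=> He ie Hf Hc.
have [g Hg] : exists g : C -> R, forall c, e (g c) = f c.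
  apply: (@fin_all_exists _ (fun _ => R) (fun c r => e r = f c)) => c.
  by case/imsetP: (Hc c) => r _ ->; exists r.
exists g; split=> // a b; apply: ie.
by rewrite He !Hg Hf.
Qed.

Lemma emb_set (C R D : FinRack) (e : R -> D) :
  is_rack_mor e -> injective e ->
  [set f in Mor C D | [forall c, f c \in e @: setT]] =
  (fun g : {ffun C -> R} => [ffun c => e (g c)]) @: Mor C R.
Proof.
move=> He ie; apply/setP => f; apply/idP/idP.
  rewrite inE => /andP [/MorP Hf /forallP Hc].
  have [g [Hg Eg]] := factor He ie Hf Hc.
  apply/imsetP; exists [ffun c => g c].
    by apply/MorP => a b; rewrite !ffunE.
  by apply/ffunP => c; rewrite !ffunE.
case/imsetP => g /MorP Hg ->; rewrite inE; apply/andP; split.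
  by apply/MorP => a b; rewrite !ffunE Hg He.
by apply/forallP => c; rewrite ffunE imset_f.
Qed.

Lemma emb_card (C R D : FinRack) (e : R -> D) :
  is_rack_mor e -> injective e ->
  #|[set f in Mor C D | [forall c, f c \in e @: setT]]| = #|Mor C R|.
Proof.
move=> He ie; rewrite emb_set // card_imset // => g1 g2 E.
by apply/ffunP => c; apply: ie; move/ffunP: E => /(_ c); rewrite !ffunE.
Qed.

Lemma iso_card (C R D : FinRack) : rack_iso R D -> #|Mor C R| = #|Mor C D|.
Proof.
case=> e [He be]; have ie := bij_inj be.
rewrite -(emb_card C He ie); apply: eq_card => f; rewrite inE.
case: (f \in Mor C D) => //=; apply/forallP => c.
by case: be => e' _ K; rewrite -[f c]K imset_f.
Qed.

Lemma iso_sym (R D : FinRack) : rack_iso R D -> rack_iso D R.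
Proof.
case=> e [He [e' K1 K2]]; exists e'; split; last by exists e.
by move=> a b; apply: (can_inj K1); rewrite He !K2.
Qed.

Lemma iso_trans (A B C : FinRack) : rack_iso A B -> rack_iso B C -> rack_iso A C.
Proof.
case=> f [Hf bf] [g [Hg bg]]; exists (fun x => g (f x)); split.
  exact: mor_comp.
exact: bij_comp.
Qed.

Lemma iso_refl (A : FinRack) : rack_iso A A.
Proof. by exists id; split=> //; exists id. Qed.



Local Close Scope ring_scope.

Lemma conn_split (C R : FinRack) (S : {set R}) :
  connected_rack C -> (forall s x, x \in S -> rop s x \in S) ->
  forall f : C -> R, is_rack_mor f -> (forall c, f c \in S) \/ (forall c, f c \notin S).
Proof.
move=> [n0 Htr] Hinv f Hf.
have key : forall g, g \in Inn C -> forall c, (f (g c) \in S) = (f c \in S).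
  apply: Inn_ind.
  - by move=> c; rewrite perm1.
  - by move=> g h Pg Ph c; rewrite permM Ph Pg.
  - by move=> a c; rewrite lpermE Hf inv_set.
case/card_gt0P: n0 => c0 _.
case E: (f c0 \in S); [left|right] => c; have [g Hg <-] := Htr c0 c;
  by rewrite key // E.
Qed.

Lemma sub_val_mor (R : FinRack) (S : {set R}) (HS : subrack S) :
  is_rack_mor (fun x : subRack HS => (val x : R)).
Proof. by []. Qed.

Lemma sub_val_inj (R : FinRack) (S : {set R}) (HS : subrack S) :
  injective (fun x : subRack HS => (val x : R)).
Proof. exact: val_inj. Qed.

Lemma sub_val_img (R : FinRack) (S : {set R}) (HS : subrack S) :
  (fun x : subRack HS => (val x : R)) @: setT = S.
Proof.
apply/setP => z; apply/imsetP/idP => [[x _ ->]|Hz]; first exact: valP.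
by exists (exist (fun z => z \in S) z Hz).
Qed.

Lemma card_subRack (R : FinRack) (S : {set R}) (HS : subrack S) :
  #|subRack HS| = #|S|.
Proof.
have E := sub_val_img HS.
have -> : #|S| = #|(fun x : subRack HS => (val x : R)) @: setT| by rewrite E.
by rewrite card_imset ?cardsT //; apply: sub_val_inj.
Qed.

Lemma dec_card (C R : FinRack) (S : {set R}) (Hinv : forall s x, x \in S -> rop s x \in S)
  (HS : subrack S) (HT : subrack (~: S)) :
  connected_rack C -> #|Mor C R| = (#|Mor C (subRack HS)| + #|Mor C (subRack HT)|)%N.
Proof.
move=> Cc.
rewrite -(cardsID [set f : {ffun C -> R} | [forall c, f c \in S]] (Mor C R)).
rewrite -(@emb_card C _ _ _ (@sub_val_mor _ _ HS) (@sub_val_inj _ _ HS)).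
rewrite -(@emb_card C _ _ _ (@sub_val_mor _ _ HT) (@sub_val_inj _ _ HT)).
rewrite !sub_val_img; congr (_ + _)%N; apply: eq_card => f.
  by rewrite in_setI [in RHS]inE [in LHS]inE andbC.
rewrite in_setD [in RHS]inE [f \in [set _ | _]]inE.
case Hm: (f \in Mor C R); rewrite ?andbF //= andbT.
have Hf : is_rack_mor f by apply/MorP.
case/card_gt0P: Cc.1 => c0 _.
have [H|H] := conn_split Cc Hinv Hf.
  have -> : [forall c, f c \in S] by apply/forallP.
  by apply/esym/negbTE/negP => /forallP /(_ c0); rewrite inE H.
apply/idP/idP.
  by move=> _; apply/forallP => c; rewrite inE H.
move=> _; apply/negP => /forallP Hc.
by move: (H c0); rewrite (Hc c0).
Qed.

Lemma not_conn_split (R : FinRack) :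
  (0 < #|R|)%N -> ~ connected_rack R ->
  exists S : {set R}, (forall s x, x \in S -> rop s x \in S) /\ (0 < #|S|)%N /\ (#|S| < #|R|)%N.
Proof.
move=> n0 Hnc.
have : ~ (forall x y : R, exists2 g, g \in Inn R & g x = y) by move=> H; apply: Hnc.
move=> /existsNP [x /existsNP [y Hxy]].
exists [set z | `[< exists2 g, g \in Inn R & g x = z >]]; split; last split.
- move=> s z; rewrite !inE => /asboolP [g Hg <-]; apply/asboolP.
  exists (g * lperm s)%g; first by rewrite groupM ?lperm_Inn.
  by rewrite permM lpermE.
- apply/card_gt0P; exists x; rewrite inE; apply/asboolP; exists 1%g; rewrite ?group1 ?perm1 //.
- rewrite -(cardsC [set z | `[< exists2 g, g \in Inn R & g x = z >]]) -[X in (X < _)%N]addn0 ltn_add2l.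
  by apply/card_gt0P; exists y; rewrite !inE; apply/asboolP.
Qed.


Local Close Scope ring_scope.

Local Open Scope ring_scope.

Lemma subrackT (R : FinRack) : subrack [set: R].
Proof. by apply: inv_subrack => s x; rewrite !inE. Qed.

Lemma subrack0 (R : FinRack) : subrack (set0 : {set R}).
Proof. by apply: inv_subrack => s x; rewrite !inE. Qed.

Arguments subrackT : clear implicits.
Arguments subrack0 : clear implicits.

Lemma iso_subT (R : FinRack) : rack_iso R (subRack (subrackT R)).
Proof.
exists (fun x : R => (exist _ x (in_setT x) : subRack (subrackT R))); split.
  by move=> a b; apply: val_inj.
by exists (fun y : subRack (subrackT R) => val y) => [x|y] //; apply: val_inj.
Qed.

Lemma iso_sub0 (R : FinRack) : #|R| = 0%N -> rack_iso R (subRack (subrack0 R)).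
Proof.
move=> E.
have F : forall x : R, False by move=> x; have := card0_eq E x; rewrite inE.
exists (fun x : R => match F x with end); split.
  by move=> a; case: (F a).
exists (fun y : subRack (subrack0 R) => val y) => [x|y]; first by case: (F x).
by case: (F (val y)).
Qed.

Lemma Mor_empty (C R : FinRack) : connected_rack C -> #|R| = 0%N -> #|Mor C R| = 0%N.
Proof.
move=> [n0 _] E; apply/eqP; rewrite -leqn0.
apply: leq_trans (subset_leq_card (subsetT (Mor C R))) _.
by rewrite cardsT card_ffun E exp0n.
Qed.

Lemma norm_empty (Reps : FinRack -> Prop) (R : FinRack) : #|R| = 0%N ->
  exists L : fsum, (forall p, List.In p L -> Reps p.2) /\
    spanned (fun Q => fcoef [:: (1, R)] Q - fcoef L Q) /\
    forall C, connected_rack C -> (#|Mor C R|)%:Z = Phi C L.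
Proof.
move=> E.
  exists [::]; split=> //; split; last first.
    by move=> C Cc; rewrite Mor_empty // Phi_nil.
  have r1 : relator [:: (1, R); (-1, subRack (subrackT R)); (-1, subRack (subrack0 R))].
    right; exists R, setT, set0, (subrackT R), (subrack0 R); split; last by rewrite setU0.
    by rewrite disjoints_subset setC0 subxx.
  have r2 : relator [:: (1, R); (-1, subRack (subrackT R))].
    by left; exists R, (subRack (subrackT R)); split=> //; apply: iso_subT.
  have r3 : relator [:: (1, R); (-1, subRack (subrack0 R))].
    by left; exists R, (subRack (subrack0 R)); split=> //; apply: iso_sub0.
  have := spannedD (spannedD (spannedZ (-1) (spanned_rel r1)) (spanned_rel r2)) (spanned_rel r3).
  apply: spanned_ext => Q; rewrite !fcoef_cons !fcoef_nil /=.
  by case: ifP; case: ifP; case: ifP => _ _ _; rewrite /= ?mulr0 ?addr0 ?add0r ?mulrN ?mulr1 ?opprK //=.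
Qed.

Lemma norm1 (Reps : FinRack -> Prop)
  (Reps_cover : forall C, connected_rack C -> exists2 C', Reps C' & rack_iso C C') :
  forall n (R : FinRack), (#|R| <= n)%N ->
  exists L : fsum, (forall p, List.In p L -> Reps p.2) /\
    spanned (fun Q => fcoef [:: (1, R)] Q - fcoef L Q) /\
    forall C, connected_rack C -> (#|Mor C R|)%:Z = Phi C L.
Proof.
elim=> [|n IH] R HR.
  by apply: norm_empty; apply/eqP; rewrite -leqn0.
have [E|nE] := eqVneq #|R| 0%N; first exact: norm_empty.
have [Cc|nCc] := pselect (connected_rack R).
  have [C' RC' iso] := Reps_cover R Cc.
  exists [:: (1, C')]; split; first by move=> p [<-|].
  split; last by move=> C _; rewrite Phi_cons Phi_nil addr0 mul1r (iso_card _ iso).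
  have r : relator [:: (1, R); (-1, C')] by left; exists R, C'.
  apply: spanned_ext (spanned_rel r) => Q; rewrite !fcoef_cons !fcoef_nil /=.
  by case: ifP; case: ifP => _ _; rewrite /= ?addr0 ?add0r ?subr0 ?sub0r.
have n0 : (0 < #|R|)%N by rewrite lt0n.
have [S [Hinv [S0 S1]]] := not_conn_split n0 nCc.
have HS := inv_subrack Hinv.
have HT := inv_subrack (inv_compl Hinv).
have cS : (#|subRack HS| <= n)%N by rewrite card_subRack -ltnS (leq_trans S1).
have cT : (#|subRack HT| <= n)%N.
  rewrite card_subRack -ltnS (leq_trans _ HR) //.
  by rewrite -(cardsC S) -[X in (X < _)%N]add0n ltn_add2r.
have [L1 [R1 [Sp1 M1]]] := IH _ cS.
have [L2 [R2 [Sp2 M2]]] := IH _ cT.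
exists (L1 ++ L2); split.
  by move=> p /In_cat [] ?; [apply: R1|apply: R2].
split; last first.
  by move=> C Cc; rewrite (dec_card Hinv HS HT Cc) PoszD M1 ?M2 ?Phi_cat.
have r : relator [:: (1, R); (-1, subRack HS); (-1, subRack HT)].
  right; exists R, S, (~: S), HS, HT; split; last by rewrite setUCr.
  by rewrite disjoints_subset setCK.
apply: spanned_ext (spannedD (spannedD (spanned_rel r) Sp1) Sp2) => Q.
rewrite fcoef_cat !fcoef_cons !fcoef_nil /=.
by case: ifP; case: ifP; case: ifP => _ _ _; rewrite /=; ring.
Qed.

Lemma normalize (Reps : FinRack -> Prop)
  (Reps_cover : forall C, connected_rack C -> exists2 C', Reps C' & rack_iso C C') :
  forall x : fsum, exists xN : fsum, (forall p, List.In p xN -> Reps p.2) /\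
    spanned (fun Q => fcoef x Q - fcoef xN Q) /\
    forall C, connected_rack C -> Phi C x = Phi C xN.
Proof.
elim=> [|[c R] x [xN [Hr [Sp HP]]]].
  exists [::]; split=> //; split=> //.
  by apply: spanned_ext spanned0 => Q; rewrite fcoef_nil subrr.
have [L [HL [SL PL]]] := norm1 Reps_cover (leqnn #|R|).
exists (map (fun p => (c * p.1, p.2)) L ++ xN); split.
  move=> p /In_cat [H|]; last exact: Hr.
  by case: (In_map_inv H) => q [Hq ->]; exact: (HL _ Hq).
split.
  apply: spanned_ext (spannedD (spannedZ c SL) Sp) => Q.
  rewrite fcoef_cat fcoef_scale !fcoef_cons fcoef_nil /=.
  by case: ifP => _; ring.
move=> C Cc; rewrite Phi_cons Phi_cat Phi_scale /= PL // HP //.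
Qed.


Local Close Scope ring_scope.

Definition embeds (R D : FinRack) (E : {set D}) : Prop :=
  exists e : R -> D, is_rack_mor e /\ injective e /\ e @: setT = E.

Definition surj (K D : FinRack) (E : {set D}) : nat :=
  #|[set f in Mor K D | (fun x => f x) @: setT == E]|.

Arguments embeds : clear implicits.
Arguments surj : clear implicits.

Definition NE (R D : FinRack) : nat := #|[set E : {set D} | `[< embeds R D E >]]|.

Lemma Mor_partition (K D : FinRack) : #|Mor K D| = \sum_(E : {set D}) surj K D E.
Proof.
rewrite -sum1_card (partition_big (fun f : {ffun K -> D} => (fun x => f x) @: setT) predT) //=.
apply: eq_bigr => E _; rewrite /surj -sum1_card; apply: eq_bigl => f; by rewrite !inE.
Qed.

Lemma embeds_card (R D : FinRack) (E : {set D}) : embeds R D E -> #|E| = #|R|.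
Proof. by case=> e [_ [ie <-]]; rewrite card_imset // cardsT. Qed.

Lemma surj_transport (K R D : FinRack) (E : {set D}) :
  embeds R D E -> surj K D E = surj K R setT.
Proof.
case=> e [He [ie Ee]]; rewrite /surj.
have -> : [set f in Mor K D | (fun x => f x) @: setT == E] =
  (fun g : {ffun K -> R} => [ffun c => e (g c)]) @:
     [set g in Mor K R | (fun x => g x) @: setT == setT].
  apply/setP => f; apply/idP/idP.
    rewrite inE => /andP [/MorP Hf /eqP If].
    have Hc : forall c, f c \in e @: setT by move=> c; rewrite Ee -If imset_f.
    have [g [Hg Eg]] := factor He ie Hf Hc.
    apply/imsetP; exists [ffun c => g c]; last by apply/ffunP => c; rewrite !ffunE.
    rewrite inE; apply/andP; split; first by apply/MorP => a b; rewrite !ffunE.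
    apply/eqP/setP => x; rewrite [RHS]inE; apply/imsetP.
    have : e x \in (fun x => f x) @: setT by rewrite If -Ee imset_f.
    case/imsetP => c _ Hxc; exists c => //; rewrite ffunE; apply: ie; by rewrite Eg.
  case/imsetP => g Hgg ->; rewrite inE in Hgg; case/andP: Hgg => /MorP Hg /eqP Ig; rewrite inE.
  apply/andP; split; first by apply/MorP => a b; rewrite !ffunE Hg He.
  apply/eqP; rewrite -Ee -Ig -imset_comp; apply: eq_imset => c; by rewrite ffunE.
rewrite card_imset // => g1 g2 E12.
by apply/ffunP => c; apply: ie; move/ffunP: E12 => /(_ c); rewrite !ffunE.
Qed.

Lemma surj_pos (K : FinRack) : (0 < surj K K setT)%N.
Proof.
apply/card_gt0P; exists [ffun c => c]; rewrite inE; apply/andP; split.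
  by apply/MorP => a b; rewrite !ffunE.
apply/eqP/setP => x; rewrite inE; apply/imsetP; exists x => //; by rewrite ffunE.
Qed.

Lemma surj_big (K D : FinRack) (E : {set D}) : ~~ (#|E| < #|K|)%N ->
  surj K D E = if `[< embeds K D E >] then surj K K setT else 0%N.
Proof.
move=> nE; case: asboolP => [|nemb]; first exact: surj_transport.
apply/eqP; rewrite cards_eq0; apply/eqP/setP => f; rewrite in_set0 in_set.
apply/negbTE/negP => /andP [/MorP Hf /eqP If]; apply: nemb.
exists f; split=> //; split=> //.
have : #|(fun x => f x) @: setT| == #|[set: K]|.
  rewrite eqn_leq leq_imset_card /= If cardsT; by rewrite leqNgt.
move/imset_injP => Hi x y; apply: Hi; by rewrite inE.
Qed.

Lemma img_subrack (K D : FinRack) (f : K -> D) : is_rack_mor f -> subrack (f @: setT).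
Proof.
move=> Hf s Hs; apply/eqP; rewrite eqEcard (card_imset _ (@rop_inj _ s)).
rewrite leqnn andbT; apply/subsetP => _ /imsetP [y Hy ->].
case/imsetP: Hs => a _ ->; case/imsetP: Hy => b _ ->.
by rewrite -Hf imset_f.
Qed.

Lemma img_connected (K D : FinRack) (f : K -> D) (Hf : is_rack_mor f) :
  connected_rack K -> connected_rack (subRack (img_subrack Hf)).
Proof.
move=> [n0 Htr]; split.
  rewrite card_subRack; case/card_gt0P: n0 => c _.
  by apply/card_gt0P; exists (f c); apply: imset_f.
have key : forall g, g \in Inn K -> forall a (ua : subRack (img_subrack Hf)),
    val ua = f a -> exists2 h, h \in Inn (subRack (img_subrack Hf)) & val (h ua) = f (g a).
  apply: Inn_ind.
  - by move=> a ua Ea; exists 1%g; [exact: group1 | rewrite !perm1].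
  - move=> g h Pg Ph a ua Ea.
    have [h1 Ih1 E1] := Pg a ua Ea.
    have [h2 Ih2 E2] := Ph (g a) (h1 ua) E1.
    by exists (h1 * h2)%g; rewrite ?groupM // !permM.
  - move=> k a ua Ea.
    have Hk : f k \in f @: setT by apply: imset_f.
    exists (lperm (exist (fun z => z \in f @: setT) (f k) Hk : subRack (img_subrack Hf))).
      exact: lperm_Inn.
    by rewrite lpermE /= lpermE Hf -Ea.
move=> u v.
have /imsetP [a _ Ea] : val u \in f @: setT by apply: valP.
have /imsetP [b _ Eb] : val v \in f @: setT by apply: valP.
have [g Hg Egab] := Htr a b.
have [h Ih Eh] := key g Hg a u Ea.
by exists h => //; apply: val_inj; rewrite Eh Egab Eb.
Qed.

Lemma conn_image (Reps : FinRack -> Prop)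
  (Reps_cover : forall C, connected_rack C -> exists2 C', Reps C' & rack_iso C C')
  (K D : FinRack) (f : K -> D) :
  connected_rack K -> is_rack_mor f -> exists R, Reps R /\ embeds R D (f @: setT).
Proof.
move=> Kc Hf.
have [R RR iso] := Reps_cover _ (img_connected Hf Kc).
have [phi [Hphi [psi K1 K2]]] := iso_sym iso.
exists R; split=> //.
exists (fun x => val (phi x)); split; first exact: mor_comp Hphi (@sub_val_mor _ _ _).
split; first by move=> x y /val_inj /(can_inj K1).
rewrite imset_comp.
have -> : phi @: setT = setT.
  by apply/setP => y; rewrite inE; apply/imsetP; exists (psi y); rewrite ?K2.
exact: sub_val_img.
Qed.

Lemma emb_iso (R1 R2 D : FinRack) (E : {set D}) :
  embeds R1 D E -> embeds R2 D E -> rack_iso R1 R2.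
Proof.
move=> H1 H2; have c1 := embeds_card H1; have c2 := embeds_card H2.
case: H1 => e1 [He1 [ie1 Ee1]]; case: H2 => e2 [He2 [ie2 Ee2]].
have Hc : forall x, e1 x \in e2 @: setT by move=> x; rewrite Ee2 -Ee1 imset_f.
have [g [Hg Eg]] := factor He2 ie2 He1 Hc.
exists g; split=> //.
have ig : injective g by move=> x y Exy; apply: ie1; rewrite -!Eg Exy.
apply: (inj_card_bij ig); by rewrite -c1 -c2.
Qed.

Local Open Scope ring_scope.

Definition rep (Reps : FinRack -> Prop) (D : FinRack) (E : {set D}) : FinRack :=
  match pselect (exists R, Reps R /\ embeds R D E) with
  | left H => proj1_sig (cid H)
  | right _ => D
  end.

Lemma rep_spec Reps D E : (exists R, Reps R /\ embeds R D E) ->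
  Reps (rep Reps E) /\ embeds (rep Reps E) D E.
Proof. by rewrite /rep; case: pselect => // H _; exact: proj2_sig (cid H). Qed.

Lemma rep_Reps Reps D E : Reps D -> Reps (@rep Reps D E).
Proof. by rewrite /rep; case: pselect => // H _; case: (proj2_sig (cid H)). Qed.

Definition RL (Reps : FinRack -> Prop) (z : fsum) : seq FinRack :=
  dedupF (flatten (map (fun p : int * FinRack => map (@rep Reps p.2) (enum [set: {set p.2}])) z)).

Lemma RL_Reps Reps z : (forall p, List.In p z -> Reps p.2) ->
  forall R, List.In R (RL Reps z) -> Reps R.
Proof.
move=> Hz R; rewrite /RL In_dedup In_flatten => [[p [Hp HR]]].
case: (In_map_inv HR) => E [_ ->]; apply: rep_Reps; exact: Hz.
Qed.

Lemma RL_cover Reps (z : fsum) (p : int * FinRack) (E : {set p.2}) : List.In p z ->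
  List.In (rep Reps E) (RL Reps z).
Proof.
move=> Hp; rewrite /RL In_dedup In_flatten; exists p; split=> //.
apply: In_map; apply: memIn; by rewrite mem_enum inE.
Qed.

Definition W (z : fsum) (R : FinRack) : int := \sum_(p <- z) p.1 * (NE R p.2)%:Z.

Lemma Posz_sum (I : Type) (r : seq I) (P : pred I) (F : I -> nat) :
  ((\sum_(i <- r | P i) F i)%N)%:Z = \sum_(i <- r | P i) (F i)%:Z.
Proof. exact: (big_morph Posz PoszD (erefl _)). Qed.

Lemma sumE_small (R D K : FinRack) (s : int) :
  \sum_(E : {set D} | (#|E| < #|K|)%N) (if `[< embeds R D E >] then s else 0) =
  if (#|R| < #|K|)%N then s * (NE R D)%:Z else 0.
Proof.
rewrite big_mkcond /=; case: ifP => HR.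
  have -> : (NE R D)%:Z = \sum_(E : {set D}) (if `[< embeds R D E >] then 1 else 0).
    rewrite /NE -sum1_card big_mkcond /= Posz_sum; apply: eq_bigr => E _.
    by rewrite inE; case: asboolP.
  rewrite big_distrr /=; apply: eq_bigr => E _; case: asboolP => [em|_]; last by case: ifP; rewrite mulr0.
  by rewrite (embeds_card em) HR mulr1.
apply: big1 => E _; case: ifP => // HE; case: asboolP => // em.
by move: HE; rewrite (embeds_card em) HR.
Qed.

Lemma sum_emb (R D : FinRack) (s : int) :
  \sum_(E : {set D}) (if `[< embeds R D E >] then s else 0) = s * (NE R D)%:Z.
Proof.
have -> : (NE R D)%:Z = \sum_(E : {set D}) (if `[< embeds R D E >] then 1 else 0).
  rewrite /NE -sum1_card big_mkcond /= Posz_sum; apply: eq_bigr => E _.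
  by rewrite inE; case: asboolP.
by rewrite big_distrr /=; apply: eq_bigr => E _; case: asboolP; rewrite ?mulr1 ?mulr0.
Qed.

Lemma xchg (I J : Type) (rI : seq I) (rJ : seq J) (P : pred I) (F : I -> J -> int) :
  \sum_(i <- rI | P i) \sum_(j <- rJ) F i j = \sum_(j <- rJ) \sum_(i <- rI | P i) F i j.
Proof.
elim: rI => [|i rI IH]; first by rewrite big_nil big1 // => j _; rewrite big_nil.
rewrite big_cons IH; case: ifP => Pi.
  by rewrite -big_split /=; apply: eq_bigr => j _; rewrite big_cons Pi.
by apply: eq_bigr => j _; rewrite big_cons Pi.
Qed.

Lemma sum_zero (T : Type) (s : seq T) (F : T -> int) :
  (forall p, List.In p s -> F p = 0) -> \sum_(p <- s) F p = 0.
Proof.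
elim: s => [|a s IH] H; first by rewrite big_nil.
by rewrite big_cons H /= ?IH ?add0r // => [p Hp|]; [apply: H; right|left].
Qed.

Section Main.
Variables (Reps : FinRack -> Prop)
  (Reps_conn : forall C, Reps C -> connected_rack C)
  (Reps_cover : forall C, connected_rack C -> exists2 C', Reps C' & rack_iso C C')
  (Reps_uniq : forall C1 C2, Reps C1 -> Reps C2 -> rack_iso C1 C2 -> C1 = C2)
  (z : fsum) (Hz : forall p, List.In p z -> Reps p.2).

Lemma surj_RL (K : FinRack) (p : int * FinRack) (E : {set p.2}) :
  Reps K -> List.In p z ->
  (surj K p.2 E)%:Z = \sum_(R <- RL Reps z)
      (if `[< embeds R p.2 E >] then (surj K R setT)%:Z else 0).
Proof.
move=> RK Hp.
have [Hex|Hnex] := pselect (exists R, Reps R /\ embeds R p.2 E).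
  have [Rr Er] := rep_spec Hex.
  rewrite (@sum_unique _ _ _ (fun a => (surj K a setT)%:Z) (rep Reps E)).
  - by rewrite (surj_transport _ Er).
  - exact: NoDup_dedup.
  - exact: RL_cover.
  - exact: Er.
  - move=> R HR ER; apply: Reps_uniq => //; first exact: RL_Reps HR.
    exact: emb_iso ER Er.
rewrite sum_none; last by move=> R HR ER; apply: Hnex; exists R; split=> //; exact: RL_Reps HR.
apply/eqP; rewrite eqz_nat cards_eq0; apply/eqP/setP => f; rewrite in_set0 in_set.
apply/negbTE/negP => /andP [/MorP Hf /eqP If]; apply: Hnex.
have [R [RR ER]] := conn_image Reps_cover (Reps_conn RK) Hf.
by exists R; split=> //; rewrite -If.
Qed.

Lemma step1 (HPhi : forall K, Reps K -> Phi K z = 0) :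
  forall n K, Reps K -> (#|K| <= n)%N -> W z K = 0.
Proof.
elim=> [|n IH] K RK HK.
  move: HK; rewrite leqn0 => /eqP E; by move: (Reps_conn RK).1; rewrite E.
set a := (surj K K setT)%:Z.
have E1 : forall p, List.In p z -> (#|Mor K p.2|)%:Z =
   \sum_(E : {set p.2} | (#|E| < #|K|)%N) \sum_(R <- RL Reps z)
       (if `[< embeds R p.2 E >] then (surj K R setT)%:Z else 0) + a * (NE K p.2)%:Z.
  move=> p Hp; rewrite Mor_partition Posz_sum (bigID (fun E : {set p.2} => (#|E| < #|K|)%N)) /=.
  congr (_ + _); first by apply: eq_bigr => E _; apply: surj_RL.
  rewrite (eq_bigr (fun E => if `[< embeds K p.2 E >] then a else 0)); last first.
    by move=> E HE; rewrite (surj_big HE); case: asboolP.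
  have HH := sum_emb K p.2 a.
  rewrite (bigID (fun E : {set p.2} => (#|E| < #|K|)%N)) /= sumE_small ltnn add0r in HH.
  exact: HH.
have H0 := HPhi K RK; rewrite /Phi in H0.
have H1 : \sum_(p <- z) p.1 * (#|Mor K p.2|)%:Z =
   \sum_(p <- z) p.1 * (\sum_(E : {set p.2} | (#|E| < #|K|)%N) \sum_(R <- RL Reps z)
       (if `[< embeds R p.2 E >] then (surj K R setT)%:Z else 0)) + a * W z K.
  rewrite /W big_distrr -big_split /=; apply: eq_big_In => p Hp; rewrite E1 //.
  by rewrite mulrDr mulrCA.
have H2 : \sum_(p <- z) p.1 * (\sum_(E : {set p.2} | (#|E| < #|K|)%N) \sum_(R <- RL Reps z)
       (if `[< embeds R p.2 E >] then (surj K R setT)%:Z else 0)) = 0.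
  under eq_bigr => p _ do rewrite big_distrr /=.
  under eq_bigr => p _ do under eq_bigr => E _ do rewrite big_distrr /=.
  under eq_bigr => p _ do rewrite xchg.
  rewrite xchg; apply: sum_zero => R HR.
  rewrite (eq_big_In (G := fun p => p.1 * (if (#|R| < #|K|)%N then (surj K R setT)%:Z * (NE R p.2)%:Z else 0))); last first.
    by move=> p _; rewrite -big_distrr /= sumE_small.
  case HRK: (#|R| < #|K|)%N; last by rewrite big1 // => p _; rewrite mulr0.
  rewrite (eq_big_In (G := fun p => (surj K R setT)%:Z * (p.1 * (NE R p.2)%:Z))); last first.
    by move=> p _; rewrite mulrCA.
  rewrite -big_distrr /= -/(W z R) IH ?mulr0 //; first exact: RL_Reps HR.
  by rewrite -ltnS (leq_trans HRK).
move: H0; rewrite H1 H2 add0r => /eqP; rewrite mulf_eq0 => /orP [|/eqP //].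
by rewrite /a eqz_nat => /eqP E; have := surj_pos K; rewrite E.
Qed.
End Main.

Lemma group_sum (z : fsum) (F : FinRack -> int) :
  \sum_(p <- z) p.1 * F p.2 = \sum_(D <- dedupF (map snd z)) fcoef z D * F D.
Proof.
rewrite (eq_big_In (s := dedupF _)
   (G := fun D => \sum_(p <- z) (if `[< p.2 = D >] then p.1 * F D else 0))); last first.
  move=> D _; rewrite /fcoef big_distrl /=; apply: eq_big_In => p _.
  by case: asboolP; rewrite ?mul0r.
rewrite xchg; apply: eq_big_In => p Hp.
rewrite (@sum_unique _ _ (fun D => p.2 = D) (fun D => p.1 * F D) p.2) //.
- exact: NoDup_dedup.
- by rewrite In_dedup; apply: In_map.
Qed.

Section Main2.
Variables (Reps : FinRack -> Prop)
  (Reps_uniq : forall C1 C2, Reps C1 -> Reps C2 -> rack_iso C1 C2 -> C1 = C2)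
  (z : fsum) (Hz : forall p, List.In p z -> Reps p.2).

Lemma NE_self (R : FinRack) : NE R R = 1%N.
Proof.
rewrite /NE -(cards1 (setT : {set R})); apply: eq_card => E; rewrite !inE.
apply/asboolP/eqP => [em|->].
  apply/eqP; rewrite eqEcard subsetT /= (embeds_card em) cardsT //.
by exists id; split=> //; split=> //; apply/setP => x; rewrite inE; apply/imsetP; exists x.
Qed.

Lemma NE_zero (R D : FinRack) : Reps R -> Reps D -> R <> D -> (#|D| <= #|R|)%N -> NE R D = 0%N.
Proof.
move=> RR RD nRD hle; apply/eqP; rewrite cards_eq0; apply/eqP/setP => E; rewrite !inE.
apply/negbTE/asboolP => [[e [He [ie _]]]]; apply: nRD; apply: Reps_uniq => //.
exists e; split=> //; apply: (inj_card_bij ie); exact: hle.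
Qed.

Lemma step2 (HW : forall K, Reps K -> W z K = 0) : forall R, fcoef z R = 0.
Proof.
set B := (\max_(p <- z) #|p.2|)%N.
have HB : forall p, List.In p z -> (#|p.2| <= B)%N.
  move=> p; rewrite /B; elim: z => [|a s IH] //= [->|Hp]; rewrite big_cons.
    exact: leq_maxl.
  exact: leq_trans (IH Hp) (leq_maxr _ _).
suff : forall m (R : FinRack), (B - #|R| < m)%N -> fcoef z R = 0 by move=> H R; apply: (H (B - #|R|).+1).
elim=> [|m IH] R HR //.
have [[p [Hp Ep]]|Hn] := pselect (exists p, List.In p z /\ p.2 = R); last first.
  rewrite /fcoef; apply: sum_zero => p Hp; case: asboolP => // E; case: Hn; by exists p.
have RR : Reps R by rewrite -Ep; exact: Hz.
have := HW R RR; rewrite /W (group_sum z (fun D => (NE R D)%:Z)).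
rewrite (eq_big_In (G := fun D => if `[< D = R >] then fcoef z D * (NE R D)%:Z else 0)); last first.
  move=> D HD; case: asboolP => // nDR.
  rewrite In_dedup in HD; case: (In_map_inv HD) => q [Hq ED].
  have RD : Reps D by rewrite ED; exact: Hz.
  have DB : (#|D| <= B)%N by rewrite ED; exact: HB.
  case: (ltnP #|R| #|D|) => h.
    by rewrite IH ?mul0r //; move: HR h DB; clear; lia.
  by rewrite NE_zero ?mulr0 // => E; apply: nDR.
rewrite (@sum_unique _ _ (fun D => D = R) (fun D => fcoef z D * (NE R D)%:Z) R) //.
- by rewrite NE_self mulr1.
- exact: NoDup_dedup.
- by rewrite In_dedup -Ep; apply: In_map.
Qed.
End Main2.


Local Close Scope ring_scope.

Unset Implicit Arguments.

Theorem theorem5p8 (Reps : FinRack -> Prop)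
  (Reps_conn : forall C, Reps C -> connected_rack C)
  (Reps_cover : forall C, connected_rack C -> exists2 C', Reps C' & rack_iso C C')
  (Reps_uniq : forall C1 C2, Reps C1 -> Reps C2 -> rack_iso C1 C2 -> C1 = C2)
  (x y : fsum) :
  (forall C, Reps C -> Phi C x = Phi C y) -> burnside_eq x y.
Proof.
move=> H.
have [xN [Hx [Sx Px]]] := normalize Reps_cover x.
have [yN [Hy [Sy Py]]] := normalize Reps_cover y.
pose z := xN ++ map (fun p : int * FinRack => ((-1) * p.1, p.2)%R) yN.
have Hz : forall p, List.In p z -> Reps p.2.
  move=> p /In_cat [|Hp]; first exact: Hx.
  by case: (In_map_inv Hp) => q [Hq ->]; exact: (Hy _ Hq).
have HPhi : forall K, Reps K -> Phi K z = 0%R.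
  move=> K RK; have CK := Reps_conn K RK.
  by rewrite Phi_cat Phi_scale -(Px _ CK) H // (Py _ CK); ring.
have Hf := step2 Reps_uniq Hz (fun K RK => step1 Reps_conn Reps_cover Reps_uniq Hz HPhi RK (leqnn #|K|)).
apply: spanned_beq.
apply: spanned_ext (spannedD Sx (spannedZ (-1)%R Sy)) => Q.
have := Hf Q; rewrite fcoef_cat fcoef_scale => e.
have -> : fcoef xN Q = fcoef yN Q.
  by apply/eqP; rewrite -subr_eq0; apply/eqP; rewrite -e; ring.
by ring.
Qed.


Local Close Scope ring_scope.
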